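(* Let $\varepsilon$ be an end of a graph $G$ and $U$ a countable set of vertices of $G$. If there is an uncountable collection $\mathcal{C}$ of internally disjoint $\varepsilon$--$U$ combs in $G$, then $G$ contains a $|\mathcal{C}|$-star of rays, all of whose rays belong to $\varepsilon$, whose leaf rays are the spines of (a subset of) the combs in $\mathcal{C}$.
   Context: A ray is a one-way infinite path; two rays are equivalent if there are infinitely many disjoint paths between them; an end is an equivalence class of rays. An $\varepsilon$--$U$ comb is a subgraph $C=R\cup\bigcup\mathcal{P}$ of $G$ consisting of a ray $R$ (its spine) disjoint from $U$ and belonging to $\varepsilon$, and an infinite family $\mathcal{P}$ of disjoint $R$--$U$ paths; its interior is $C-U$; two such combs are internally disjoint if their interiors are disjoint. A $\kappa$-star of rays consists of pairwise disjoint rays $R$ (centre ray) and $R_i$, $i\in I$, $|I|=\kappa$ (leaf rays), together with a set $\mathcal{P}$ of independent paths (no inner vertex of one lies on another), each meeting the union of these rays exactly in its endvertices and joining $R$ to some $R_i$, such that for each $i$ there are infinitely many disjoint $R_i$--$R$ paths in $\mathcal{P}$. *)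

(* Defs.v *)
From Stdlib Require Import List.
Import ListNotations.

Section Graphs.
Context {V : Type} (adj : V -> V -> Prop).

Fixpoint chain (l : list V) : Prop :=
  match l with
  | x :: ((y :: _) as t) => adj x y /\ chain t
  | _ => True
  end.

Definition is_path (p : list V) : Prop := p <> [] /\ NoDup p /\ chain p.

(* Diestel's A--B path: meets A exactly in its first vertex and B exactly in its last *)
Definition AB_path (A B : V -> Prop) (p : list V) : Prop :=
  is_path p /\
  (exists x t, p = x :: t /\ A x /\ forall y, In y t -> ~ A y) /\
  (exists t x, p = t ++ [x] /\ B x /\ forall y, In y t -> ~ B y).

Definition disjoint_lists (p q : list V) : Prop := forall v, In v p -> ~ In v q.

Definition is_ray (r : nat -> V) : Prop :=
  (forall n m, r n = r m -> n = m) /\ forall n, adj (r n) (r (S n)).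

Definition in_ray (r : nat -> V) (v : V) : Prop := exists n, r n = v.

Definition equiv_rays (R1 R2 : nat -> V) : Prop :=
  exists f : nat -> list V,
    (forall n, AB_path (in_ray R1) (in_ray R2) (f n)) /\
    (forall n m, n <> m -> disjoint_lists (f n) (f m)).

Definition is_end (eps : (nat -> V) -> Prop) : Prop :=
  exists R0, is_ray R0 /\ forall R, eps R <-> (is_ray R /\ equiv_rays R0 R).

Definition countable_set (U : V -> Prop) : Prop :=
  exists f : V -> nat, forall x y, U x -> U y -> f x = f y -> x = y.

Record comb := mkComb { spine : nat -> V; teeth : nat -> list V }.

Definition is_comb (eps : (nat -> V) -> Prop) (U : V -> Prop) (c : comb) : Prop :=
  is_ray (spine c) /\ eps (spine c) /\
  (forall v, in_ray (spine c) v -> ~ U v) /\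
  (forall n, AB_path (in_ray (spine c)) U (teeth c n)) /\
  (forall n m, n <> m -> disjoint_lists (teeth c n) (teeth c m)).

Definition in_comb (c : comb) (v : V) : Prop :=
  in_ray (spine c) v \/ exists n, In v (teeth c n).

Definition comb_interior (U : V -> Prop) (c : comb) (v : V) : Prop :=
  in_comb c v /\ ~ U v.

Definition internally_disjoint (U : V -> Prop) (c1 c2 : comb) : Prop :=
  forall v, comb_interior U c1 v -> ~ comb_interior U c2 v.

Definition inner_vertex (p : list V) (v : V) : Prop :=
  exists x m y, p = x :: m ++ [y] /\ In v m.

Definition is_star_of_rays (J : Type) (R : nat -> V) (L : J -> nat -> V)
    (P : list V -> Prop) : Prop :=
  let in_union v := in_ray R v \/ exists k, in_ray (L k) v in
  is_ray R /\ (forall j, is_ray (L j)) /\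
  (forall j v, in_ray R v -> ~ in_ray (L j) v) /\
  (forall j k, j <> k -> forall v, in_ray (L j) v -> ~ in_ray (L k) v) /\
  (forall p, P p -> is_path p /\
     exists x m y j, p = x :: m ++ [y] /\ in_ray R x /\ in_ray (L j) y /\
       forall v, In v m -> ~ in_union v) /\
  (forall p q, P p -> P q -> p <> q -> forall v, inner_vertex p v -> ~ In v q) /\
  (forall j, exists f : nat -> list V,
     (forall n, P (f n)) /\
     (forall n, exists t y, f n = t ++ [y] /\ in_ray (L j) y) /\
     (forall n m, n <> m -> disjoint_lists (f n) (f m))).

End Graphs.

(* Main.v *)
Require Import Defs.
From Stdlib Require Import List Arith Lia Classical ClassicalEpsilon ProofIrrelevance Cantor.
Import ListNotations.


Fixpoint cntA (A : nat -> Prop) (n : nat) : nat :=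
  match n with
  | 0 => 0
  | S n => cntA A n + (if excluded_middle_informative (A n) then 1 else 0)
  end.

Lemma cntA_mono A a b : a <= b -> cntA A a <= cntA A b.
Proof. induction 1; simpl; [lia|]. destruct (excluded_middle_informative _); lia. Qed.

Lemma cntA_strict A a b : a < b -> A a -> cntA A a < cntA A b.
Proof.
  intros Hab Ha. apply Nat.lt_le_trans with (cntA A (S a)).
  - simpl. destruct (excluded_middle_informative (A a)); [lia|contradiction].
  - apply cntA_mono; lia.
Qed.

Lemma rank_bij (A : nat -> Prop) (Hinf : forall N, exists n, N <= n /\ A n) :
  (forall a b, A a -> A b -> cntA A a = cntA A b -> a = b) /\ (forall k, exists a, A a /\ cntA A a = k).
Proof.
  split.
  - intros a b Ha Hb E. destruct (Nat.lt_total a b) as [H|[H|H]]; auto.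
    + pose proof (cntA_strict A a b H Ha); lia.
    + pose proof (cntA_strict A b a H Hb); lia.
  - assert (Hunb : forall k, exists N, k <= cntA A N).
    { induction k. exists 0; lia. destruct IHk as [N HN]. destruct (Hinf N) as [n [Hn An]].
      exists (S n). simpl. destruct (excluded_middle_informative (A n)); [|contradiction].
      pose proof (cntA_mono A N n Hn). lia. }
    assert (Hfind : forall N k, k < cntA A N -> exists n, A n /\ cntA A n = k).
    { induction N; intros k Hk; simpl in Hk; [lia|].
      destruct (excluded_middle_informative (A N)) as [HA|HA].
      - destruct (Nat.lt_total k (cntA A N)) as [H|[H|H]]; [apply IHN; auto| exists N; auto | lia].
      - apply IHN; lia. }
    intros k. destruct (Hunb (S k)) as [N HN]. apply (Hfind N). lia.
Qed.

Lemma hotel {I : Type} (S : I -> Prop) (e : nat -> I) (He : forall n m, e n = e m -> n = m)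
  (HeS : forall n, S (e n)) (gT : I -> nat) (HgT : forall i j, ~ S i -> ~ S j -> gT i = gT j -> i = j) :
  exists f : {i | S i} -> I, (forall a b, f a = f b -> a = b) /\ (forall i, exists a, f a = i).
Proof.
  set (k_of := fun i => epsilon (inhabits 0) (fun k => e k = i)).
  assert (Hk : forall n, k_of (e n) = n).
  { intros n. apply He. unfold k_of. apply (epsilon_spec (inhabits 0) (fun k => e k = e n)). eauto. }
  assert (Hk' : forall i, (exists k, e k = i) -> e (k_of i) = i).
  { intros i [k <-]. rewrite Hk; auto. }
  set (D := fun i => ~ S i \/ exists k, e k = i).
  set (d := fun i => if excluded_middle_informative (S i) then Datatypes.S (2 * k_of i) else 2 * gT i).
  assert (Hd : forall i j, D i -> D j -> d i = d j -> i = j).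
  { intros i j Di Dj E. unfold d in E.
    destruct (excluded_middle_informative (S i)) as [Si|Si];
    destruct (excluded_middle_informative (S j)) as [Sj|Sj]; try lia.
    - destruct Di as [Di|Di]; [contradiction|]. destruct Dj as [Dj|Dj]; [contradiction|].
      rewrite <- (Hk' i Di), <- (Hk' j Dj). f_equal. lia.
    - apply HgT; auto. lia. }
  set (A := fun n => exists i, D i /\ d i = n).
  destruct (rank_bij A) as [Hc1 Hc2].
  { intros N. exists (Datatypes.S (2 * N)). split; [lia|]. exists (e N). split.
    right; eauto. unfold d. destruct (excluded_middle_informative (S (e N))); [|exfalso; auto].
    rewrite Hk; auto. }
  set (beta := fun i => cntA A (d i)).
  assert (Hb1 : forall i j, D i -> D j -> beta i = beta j -> i = j).
  { intros i j Di Dj E. apply Hd; auto. apply Hc1; auto; [exists i|exists j]; auto. }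
  assert (Hb2 : forall k, exists i, D i /\ beta i = k).
  { intros k. destruct (Hc2 k) as [a [[i [Di <-]] Ek]]. exists i. auto. }
  set (binv := fun k => epsilon (inhabits (e 0)) (fun i => D i /\ beta i = k)).
  assert (Hbinv : forall k, D (binv k) /\ beta (binv k) = k).
  { intros k. unfold binv. apply epsilon_spec. auto. }
  exists (fun s => if excluded_middle_informative (exists k, e k = proj1_sig s)
                then binv (k_of (proj1_sig s)) else proj1_sig s).
  split.
  - intros [a pa] [b pb]. simpl. intros E.
    assert (a = b).
    { destruct (excluded_middle_informative (exists k, e k = a)) as [Ea|Ea];
      destruct (excluded_middle_informative (exists k, e k = b)) as [Eb|Eb].
      - rewrite <- (Hk' a Ea), <- (Hk' b Eb). f_equal.
        rewrite <- (proj2 (Hbinv (k_of a))), <- (proj2 (Hbinv (k_of b))), E. reflexivity.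
      - exfalso. destruct (proj1 (Hbinv (k_of a))) as [H|H]; rewrite E in H; auto.
      - exfalso. destruct (proj1 (Hbinv (k_of b))) as [H|H]; rewrite <- E in H; auto.
      - auto. }
    subst b. f_equal. apply proof_irrelevance.
  - intros i. destruct (classic (D i)) as [Di|Di].
    + exists (exist _ (e (beta i)) (HeS _)). simpl.
      destruct (excluded_middle_informative (exists k, e k = e (beta i))) as [_|H]; [|exfalso; eauto].
      rewrite Hk. destruct (Hbinv (beta i)) as [D' E']. apply Hb1; auto.
    + assert (Si : S i) by (apply NNPP; intros H; apply Di; left; auto).
      exists (exist _ i Si). simpl.
      destruct (excluded_middle_informative (exists k, e k = i)) as [H|_]; auto.
      exfalso; apply Di; right; auto.
Qed.

Section Walks.
Context {V : Type} (adj : V -> V -> Prop) (Hsym : forall x y, adj x y -> adj y x).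

Lemma chain_app l1 a l2 :
  chain adj (l1 ++ a :: l2) <-> chain adj (l1 ++ [a]) /\ chain adj (a :: l2).
Proof.
  induction l1 as [|b l1 IH]; simpl.
  - split; [intros H; split; auto | intros [_ H]; exact H].
  - destruct l1 as [|c l1]; simpl in *.
    + split; [intros [H1 H2]; repeat split; auto | intros [[H1 _] H2]; auto].
    + rewrite IH. tauto.
Qed.

Lemma chain_tail a l : chain adj (a :: l) -> chain adj l.
Proof. destruct l; simpl; tauto. Qed.

Lemma chain_suffix l1 l2 : chain adj (l1 ++ l2) -> chain adj l2.
Proof. induction l1; simpl; auto. intros H; apply IHl1; eapply chain_tail; eauto. Qed.

Lemma chain_prefix l1 l2 : chain adj (l1 ++ l2) -> chain adj l1.
Proof.
  destruct l2 as [|a l2]. rewrite app_nil_r; auto.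
  intros H. apply chain_app in H. destruct H as [H _].
  revert H. induction l1 as [|b l1 IH]; simpl; auto.
  destruct l1 as [|c l1]; simpl in *; auto. tauto.
Qed.

Lemma chain_rev l : chain adj l -> chain adj (rev l).
Proof.
  induction l as [|a l IH]; simpl; auto.
  destruct l as [|b l]; simpl; auto.
  intros [Hab Hl]. specialize (IH Hl). simpl in IH.
  rewrite <- app_assoc. simpl. apply chain_app. split; auto. simpl. auto.
Qed.

Lemma chain_nth l d a : chain adj l -> S a < length l -> adj (nth a l d) (nth (S a) l d).
Proof.
  revert a. induction l as [|x l IH]; simpl; intros a H Hl; [lia|].
  destruct l as [|y l]; simpl in *; [lia|].
  destruct a; simpl; [tauto|]. apply (IH a); [tauto|lia].
Qed.

Definition walk (x : V) (l : list V) (y : V) := chain adj (x :: l) /\ last (x :: l) x = y.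

Lemma last_cons_indep (x : V) l d1 d2 : last (x :: l) d1 = last (x :: l) d2.
Proof. revert x. induction l as [|a l IH]; intros x; [reflexivity|]. exact (IH a). Qed.

Lemma last_app_cons (l1 : list V) x l2 d : last (l1 ++ x :: l2) d = last (x :: l2) x.
Proof.
  induction l1 as [|a l1 IH]; simpl. apply last_cons_indep.
  destruct (l1 ++ x :: l2) eqn:E. destruct l1; discriminate. exact IH.
Qed.

Lemma walk_nil x : walk x [] x.
Proof. split; simpl; auto. Qed.

Lemma walk_app x l1 y l2 z : walk x l1 y -> walk y l2 z -> walk x (l1 ++ l2) z.
Proof.
  intros [H1 E1] [H2 E2].
  destruct (exists_last (l := x :: l1) ltac:(discriminate)) as [l0 [a Ha]].
  assert (a = y). { rewrite Ha in E1. rewrite last_last in E1. auto. } subst a.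
  assert (Heq : x :: l1 ++ l2 = l0 ++ y :: l2). { rewrite app_comm_cons, Ha, <- app_assoc. reflexivity. }
  split.
  - rewrite Heq. apply chain_app. split. rewrite <- Ha; auto. auto.
  - rewrite Heq, last_app_cons. auto.
Qed.

Lemma walk_app_in x l1 y l2 v : walk x l1 y -> In v (x :: l1 ++ l2) -> In v (x :: l1) \/ In v (y :: l2).
Proof. intros _ H. rewrite app_comm_cons in H. apply in_app_or in H. simpl; tauto. Qed.

Lemma walk_rev x l y : walk x l y -> exists l', walk y l' x /\ (forall v, In v (y :: l') <-> In v (x :: l)).
Proof.
  intros [H E].
  destruct (exists_last (l := x :: l) ltac:(discriminate)) as [l0 [a Ha]].
  assert (a = y). { rewrite Ha in E. rewrite last_last in E. auto. } subst a.
  exists (rev l0). split; [split|].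
  - assert (Hr : y :: rev l0 = rev (x :: l)). { rewrite Ha, rev_unit. reflexivity. }
    rewrite Hr. apply chain_rev; auto.
  - assert (Hr : y :: rev l0 = rev l ++ [x]). { change (rev l ++ [x]) with (rev (x :: l)). rewrite Ha, rev_unit. reflexivity. }
    rewrite Hr, last_last. auto.
  - intros v. rewrite Ha. rewrite in_app_iff. simpl. rewrite <- in_rev. tauto.
Qed.

Lemma walk_shorten x l y : walk x l y ->
  exists l', walk x l' y /\ NoDup (x :: l') /\ forall v, In v (x :: l') -> In v (x :: l).
Proof.
  revert x. induction l as [|z l IH]; intros x Hw.
  - exists []. split; auto. split. constructor; auto; constructor. auto.
  - destruct Hw as [Hc E]. simpl in Hc. destruct Hc as [Hxz Hc].
    destruct (IH z) as [l' [[Hc' E'] [Hnd Hsub]]].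
    { split; auto. simpl in E |- *. rewrite <- E. apply last_cons_indep. }
    destruct (classic (In x (z :: l'))) as [Hin|Hnin].
    + apply in_split in Hin. destruct Hin as [a [b Hab]].
      exists b. split; [split|split].
      * rewrite Hab in Hc'. apply chain_suffix in Hc'. auto.
      * rewrite Hab in E'. rewrite last_app_cons in E'. auto.
      * rewrite Hab in Hnd. apply NoDup_app_remove_l in Hnd. auto.
      * intros v Hv. right. apply Hsub. rewrite Hab. apply in_or_app. right; auto.
    + exists (z :: l'). split; [split|split].
      * simpl. split; auto.
      * simpl in E' |- *. rewrite <- E'. apply last_cons_indep.
      * constructor; auto.
      * intros v [Hv|Hv]; [left; auto|right; apply Hsub; auto].
Qed.

Lemma ray_up (r : nat -> V) (Hr : forall n, adj (r n) (r (S n))) i d :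
  walk (r i) (map r (seq (S i) d)) (r (i + d)) /\
  forall v, In v (r i :: map r (seq (S i) d)) -> exists k, v = r k /\ i <= k.
Proof.
  revert i. induction d as [|d IH]; intros i.
  - simpl. rewrite Nat.add_0_r. split. apply walk_nil. intros v [<-|[]]. exists i; auto.
  - destruct (IH (S i)) as [[Hc E] Hin]. split; [split|].
    + simpl. split; auto.
    + simpl. simpl in E. rewrite Nat.add_succ_r. rewrite <- E. apply last_cons_indep.
    + intros v [<-|Hv]. exists i; auto. destruct (Hin v Hv) as [k [-> Hk]]. exists k; split; auto; lia.
Qed.

Lemma ray_seg (r : nat -> V) (Hr : forall n, adj (r n) (r (S n))) i j :
  exists l, walk (r i) l (r j) /\ forall v, In v (r i :: l) -> exists k, v = r k /\ Nat.min i j <= k.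
Proof.
  destruct (le_lt_dec i j) as [Hij|Hij].
  - destruct (ray_up r Hr i (j - i)) as [Hw Hin].
    replace (i + (j - i)) with j in Hw by lia.
    eexists; split; [exact Hw|]. intros v Hv. destruct (Hin v Hv) as [k [-> Hk]]. exists k; split; auto; lia.
  - destruct (ray_up r Hr j (i - j)) as [Hw Hin].
    replace (j + (i - j)) with i in Hw by lia.
    destruct (walk_rev _ _ _ Hw) as [l' [Hw' Hiff]].
    exists l'; split; auto. intros v Hv. apply Hiff in Hv. destruct (Hin v Hv) as [k [-> Hk]]. exists k; split; auto; lia.
Qed.

End Walks.

Section Main.
Context {V : Type} (adj : V -> V -> Prop) (Hsym : forall x y, adj x y -> adj y x)
  (eps : (nat -> V) -> Prop) (R0 : nat -> V) (HR0 : is_ray adj R0)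
  (HepsR : forall R, eps R <-> (is_ray adj R /\ equiv_rays adj R0 R))
  (U : V -> Prop) (h : V -> nat) (Hh : forall x y, U x -> U y -> h x = h y -> x = y)
  (I : Type) (C : I -> comb)
  (HC : forall i, is_comb adj eps U (C i))
  (Hdisj : forall i j, i <> j -> internally_disjoint U (C i) (C j)).

Definition avoid (l F : list V) := forall v, In v l -> ~ In v F.
Definition Att (u : V) (i : I) := exists n t, teeth (C i) n = t ++ [u].
Definition cntP (P : I -> Prop) := exists g : I -> nat, forall i j, P i -> P j -> g i = g j -> i = j.
Definition Upp u := U u /\ ~ cntP (Att u).
Definition Mbound (F : list V) M := forall j, M <= j -> ~ In (R0 j) F.
Definition good F x := exists l k, walk adj x l (R0 k) /\ avoid (x :: l) F /\ Mbound F k.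

Lemma interior_unique i j v : comb_interior U (C i) v -> comb_interior U (C j) v -> i = j.
Proof.
  intros Hi Hj. destruct (classic (i = j)) as [E|E]; auto.
  exfalso. exact (Hdisj i j E v Hi Hj).
Qed.

Lemma Mbound_ex F : exists M, Mbound F M.
Proof.
  induction F as [|v F [M HM]].
  - exists 0. intros j _ [].
  - destruct (classic (exists j, v = R0 j)) as [[j0 ->]|Hn].
    + exists (Nat.max M (S j0)). intros j Hj [E|E].
      * apply (proj1 HR0) in E. lia.
      * apply (HM j); auto; lia.
    + exists M. intros j Hj [E|E]. apply Hn; eauto. apply (HM j); auto.
Qed.

Lemma disj_avoid (f : nat -> list V) (Hd : forall n m, n <> m -> disjoint_lists (f n) (f m)) X :
  forall N, exists n, N <= n /\ forall v, In v (f n) -> ~ In v X.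
Proof.
  induction X as [|x X IH]; intros N.
  - exists N. split; auto.
  - destruct (IH N) as [n [Hn Hav]].
    destruct (classic (In x (f n))) as [Hx|Hx].
    + destruct (IH (S n)) as [n' [Hn' Hav']].
      destruct (classic (In x (f n'))) as [Hx'|Hx'].
      * exfalso. refine (Hd n n' _ x Hx Hx'). lia.
      * exists n'. split; [lia|]. intros v Hv [E|E]; [subst; auto|]. apply (Hav' v); auto.
    + exists n. split; auto. intros v Hv [E|E]; [subst; auto|]. apply (Hav v); auto.
Qed.

Lemma good_conn F x y : good F x -> good F y -> exists l, walk adj x l y /\ avoid (x :: l) F.
Proof.
  intros [l1 [a [Hw1 [Hav1 Hm1]]]] [l2 [b [Hw2 [Hav2 Hm2]]]].
  destruct (walk_rev adj Hsym _ _ _ Hw2) as [l2' [Hw2' Hiff]].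
  destruct (ray_seg adj Hsym R0 (proj2 HR0) a b) as [ls [Hws Hins]].
  exists (l1 ++ ls ++ l2'). split.
  - eapply walk_app; [exact Hw1|]. eapply walk_app; eauto.
  - intros v Hv. rewrite app_comm_cons in Hv. apply in_app_or in Hv. destruct Hv as [Hv|Hv].
    + apply Hav1; auto.
    + apply in_app_or in Hv. destruct Hv as [Hv|Hv].
      * destruct (Hins v (or_intror Hv)) as [k [-> Hk]].
        destruct (Nat.min_spec a b) as [[_ E]|[_ E]]; rewrite E in Hk; [apply Hm1|apply Hm2]; auto.
      * apply Hav2. apply Hiff. right; auto.
Qed.

Lemma AB_struct A B p : AB_path adj A B p -> (forall v, A v -> ~ B v) ->
  exists x m y, p = x :: m ++ [y] /\ A x /\ B y /\ forall v, In v m -> ~ A v /\ ~ B v.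
Proof.
  intros [Hp [[x [t [E1 [Ax Ht]]]] [t' [y [E2 [By Ht']]]]]] HAB.
  destruct t' as [|x' m].
  - simpl in E2. rewrite E2 in E1. injection E1 as -> ->. exfalso; exact (HAB _ Ax By).
  - rewrite E1 in E2. simpl in E2. injection E2 as <- Et.
    exists x, m, y. split; [rewrite E1, Et; reflexivity|]. split; auto. split; auto.
    intros v Hv. split.
    + apply Ht. rewrite Et. apply in_or_app; auto.
    + apply Ht'. right; auto.
Qed.

Lemma path_walk p x t t' y : is_path adj p -> p = x :: t -> p = t' ++ [y] -> walk adj x t y.
Proof.
  intros [_ [_ Hc]] E1 E2. split. rewrite <- E1; auto.
  rewrite <- E1, E2, last_last. reflexivity.
Qed.

Lemma tooth_struct i n : exists x m y, teeth (C i) n = x :: m ++ [y] /\ in_ray (spine (C i)) x /\ U y /\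
  forall v, In v m -> ~ in_ray (spine (C i)) v /\ ~ U v.
Proof.
  destruct (HC i) as [_ [_ [Hsu [Ht _]]]].
  apply AB_struct; auto.
Qed.

Lemma Att_U u i : Att u i -> U u.
Proof.
  intros [n [t E]]. destruct (tooth_struct i n) as [x [m [y [E' [_ [Uy _]]]]]].
  rewrite E' in E. change (x :: m ++ [y]) with ((x :: m) ++ [y]) in E.
  apply app_inj_tail in E. destruct E as [_ ->]. auto.
Qed.

Lemma spine_interior i k : comb_interior U (C i) (spine (C i) k).
Proof.
  destruct (HC i) as [_ [_ [Hsu _]]]. split. left; exists k; auto. apply Hsu; exists k; auto.
Qed.

Lemma Upp_good F u : Upp u -> ~ In u F -> good F u.
Proof.
  intros [Uu Hnc] HuF.
  assert (Hc : exists c, Att u c /\ forall v, In v F -> ~ comb_interior U (C c) v).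
  { apply NNPP. intros Hn. apply Hnc.
    exists (fun c => epsilon (inhabits 0) (fun k => exists w, nth_error F k = Some w /\ comb_interior U (C c) w)).
    assert (Hs : forall c, Att u c -> exists w, nth_error F (epsilon (inhabits 0) (fun k => exists w, nth_error F k = Some w /\ comb_interior U (C c) w)) = Some w /\ comb_interior U (C c) w).
    { intros c Hac. apply epsilon_spec.
      apply NNPP. intros Hn2. apply Hn. exists c. split; auto. intros v Hv Hint.
      apply Hn2. apply In_nth_error in Hv. destruct Hv as [k Hk]. exists k, v. auto. }
    intros c c' Hac Hac' E.
    destruct (Hs c Hac) as [w [Ew Hw]]. destruct (Hs c' Hac') as [w' [Ew' Hw']].
    rewrite E in Ew. rewrite Ew in Ew'. injection Ew' as <-.
    eapply interior_unique; eauto. }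
  destruct Hc as [c [[n [t Et]] Hcav]].
  destruct (tooth_struct c n) as [x [m [y [E' [[k0 Hk0] [Uy Hm]]]]]].
  assert (y = u). { rewrite E' in Et. change (x :: m ++ [y]) with ((x :: m) ++ [y]) in Et.
    apply app_inj_tail in Et. destruct Et as [_ ->]. auto. } subst y.
  destruct (HC c) as [Hrs [Heps_s [Hsu [Hteeth _]]]].
  destruct (proj1 (HepsR _) Heps_s) as [_ [f [Hf Hfd]]].
  destruct (Mbound_ex F) as [M HM].
  destruct (disj_avoid f Hfd (F ++ map R0 (seq 0 M)) 0) as [n' [_ Hav']].
  destruct (Hf n') as [Hp [[x' [t1 [E1 [[a Ha] _]]]] [t2 [y' [E2 [[b Hb] _]]]]]].
  assert (Hw1 : walk adj x (m ++ [u]) u).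
  { destruct (Hteeth n) as [Hpt _]. rewrite E' in Hpt. eapply (path_walk _ x (m ++ [u]) (x :: m) u Hpt); reflexivity. }
  destruct (walk_rev adj Hsym _ _ _ Hw1) as [l1 [Hw1' Hi1]].
  destruct (ray_seg adj Hsym (spine (C c)) (proj2 Hrs) k0 b) as [ls [Hws Hins]].
  assert (Hw3 : walk adj x' t1 y') by (eapply path_walk; eauto).
  destruct (walk_rev adj Hsym _ _ _ Hw3) as [l3 [Hw3' Hi3]].
  assert (HaM : M <= a).
  { destruct (le_lt_dec M a); auto. exfalso. apply (Hav' x'). rewrite E1; left; auto.
    apply in_or_app; right. rewrite <- Ha. apply in_map. apply in_seq. lia. }
  exists (l1 ++ ls ++ l3), a. split; [|split].
  - eapply walk_app. exact Hw1'. rewrite <- Hk0. eapply walk_app. exact Hws. rewrite Hb, Ha. exact Hw3'.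
  - intros v Hv. rewrite app_comm_cons in Hv. apply in_app_or in Hv. destruct Hv as [Hv|Hv].
    + apply Hi1 in Hv. destruct Hv as [<-|Hv]. 
      * intros HF; apply (Hcav _ HF). rewrite <- Hk0. apply spine_interior.
      * apply in_app_or in Hv. destruct Hv as [Hv|[<-|[]]]; auto.
        intros HF; apply (Hcav _ HF). split. right. exists n. rewrite E'. right. apply in_or_app; auto. apply (Hm v Hv).
    + apply in_app_or in Hv. destruct Hv as [Hv|Hv].
      * destruct (Hins v (or_intror Hv)) as [k [-> _]]. intros HF; apply (Hcav _ HF), spine_interior.
      * intros HvF. apply (Hav' v). 
        assert (In v (x' :: t1)) by (apply Hi3; right; auto). rewrite E1; auto.
        apply in_or_app; auto.
  - intros j Hj. apply HM. lia.
Qed.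


Definition Inv F e := NoDup (F ++ [e]) /\ chain adj (F ++ [e]) /\ good F e.

Lemma nodup_last_notin (F : list V) e : NoDup (F ++ [e]) -> ~ In e F.
Proof. intros H Hin. apply NoDup_remove_2 in H. rewrite app_nil_r in H. auto. Qed.

Lemma ext_lem F e q y : NoDup (F ++ [e]) -> chain adj (F ++ [e]) -> walk adj e q y -> NoDup (e :: q) ->
  avoid (e :: q) F -> q <> [] ->
  NoDup ((F ++ e :: removelast q) ++ [y]) /\ chain adj ((F ++ e :: removelast q) ++ [y]) /\
  (F ++ e :: removelast q) ++ [y] = (F ++ [e]) ++ q.
Proof.
  intros Hnd Hc [Hcq Eq] Hndq Hav Hq.
  destruct (exists_last Hq) as [q0 [z ->]].
  rewrite app_comm_cons, last_last in Eq. subst z.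
  rewrite removelast_last.
  assert (E : (F ++ e :: q0) ++ [y] = F ++ e :: q0 ++ [y]) by (rewrite <- app_assoc; reflexivity).
  rewrite E. split; [|split].
  - apply NoDup_app; auto. apply NoDup_app_remove_r in Hnd; auto.
    intros a Ha Ha'. apply (Hav a); auto.
  - apply chain_app. split; auto.
  - rewrite <- app_assoc. reflexivity.
Qed.

Lemma last_In (x : V) l : In (last (x :: l) x) (x :: l).
Proof.
  revert x. induction l as [|a l IH]; intros x; [left; reflexivity|].
  change (last (x::a::l) x) with (last (a::l) x). rewrite (last_cons_indep a l x a). right; apply IH.
Qed.

Lemma first_split (l : list V) (p : V -> Prop) : (exists v, In v l /\ p v) ->
  exists l1 v l2, l = l1 ++ v :: l2 /\ p v /\ forall w, In w l1 -> ~ p w.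
Proof.
  induction l as [|a l IH]; intros [v [Hv Hp]]; [destruct Hv|].
  destruct (classic (p a)) as [Ha|Ha].
  - exists [], a, l. split; [reflexivity|]. split; [exact Ha|]. intros w [].
  - destruct Hv as [<-|Hv]; [contradiction|].
    destruct IH as [l1 [w [l2 [E [Hw Hl1]]]]]. eauto.
    exists (a :: l1), w, l2. split; [rewrite E; reflexivity|]. split; auto.
    intros w' [<-|Hw']; auto.
Qed.

Lemma stepU F e u : Inv F e -> Upp u -> ~ In u (F ++ [e]) ->
  exists F', Inv F' u /\ exists ext, F' ++ [u] = (F ++ [e]) ++ ext.
Proof.
  intros [Hnd [Hc Hg]] Hu Hnin.
  assert (HgU : good F u). { apply Upp_good; auto. intros H; apply Hnin, in_or_app; auto. }
  destruct (good_conn F e u Hg HgU) as [l [Hw Hav]].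
  destruct (walk_shorten adj e l u Hw) as [q [Hwq [Hndq Hsub]]].
  assert (Hq : q <> []).
  { intros ->. destruct Hwq as [_ E]. simpl in E. subst. apply Hnin, in_or_app; right; left; auto. }
  assert (Havq : avoid (e :: q) F) by (intros v Hv; apply Hav, Hsub, Hv).
  destruct (ext_lem F e q u Hnd Hc Hwq Hndq Havq Hq) as [Hnd' [Hc' E']].
  exists (F ++ e :: removelast q). split; [split; [|split]|]; auto.
  - apply Upp_good; auto. apply nodup_last_notin; auto.
  - exists q; auto.
Qed.

Lemma stepR F e : Inv F e -> exists F' e', Inv F' e' /\
  (exists ext, F' ++ [e'] = (F ++ [e]) ++ ext /\ ext <> []) /\ exists j, e' = R0 j.
Proof.
  intros [Hnd [Hc [l [k [Hw [Hav Hm]]]]]].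
  destruct (Mbound_ex (F ++ [e])) as [M HM].
  destruct (ray_seg adj Hsym R0 (proj2 HR0) k (Nat.max k M)) as [ls [Hws Hins]].
  assert (Hw2 : walk adj e (l ++ ls) (R0 (Nat.max k M))) by (eapply walk_app; eauto).
  assert (Hav2 : avoid (e :: l ++ ls) F).
  { intros v Hv. rewrite app_comm_cons in Hv. apply in_app_or in Hv. destruct Hv as [Hv|Hv]; [apply Hav; auto|].
    destruct (Hins v (or_intror Hv)) as [j [-> Hj]]. apply Hm. lia. }
  destruct (walk_shorten adj _ _ _ Hw2) as [q [Hwq [Hndq Hsub]]].
  destruct (first_split (e :: q) (fun v => exists j, M <= j /\ v = R0 j)) as [l1 [v [l2 [E [[j [Hj ->]] Hl1]]]]].
  { exists (R0 (Nat.max k M)). split. destruct Hwq as [_ Eq]. rewrite <- Eq. apply last_In. exists (Nat.max k M). split; auto; lia. }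
  destruct l1 as [|e1 q1].
  { simpl in E. injection E as E _. exfalso. apply (HM j Hj). rewrite <- E. apply in_or_app; right; left; auto. }
  simpl in E. injection E as <- Eq.
  assert (Hw3 : walk adj e (q1 ++ [R0 j]) (R0 j)).
  { destruct Hwq as [Hcq _]. split.
    - rewrite Eq in Hcq. rewrite app_comm_cons in Hcq.
      replace ((e :: q1) ++ R0 j :: l2) with ((e :: q1 ++ [R0 j]) ++ l2) in Hcq
        by (simpl; rewrite <- app_assoc; reflexivity).
      apply chain_prefix in Hcq; auto.
    - rewrite app_comm_cons, last_last; reflexivity. }
  assert (Hnd3 : NoDup (e :: q1 ++ [R0 j])).
  { rewrite Eq in Hndq. replace (e :: q1 ++ R0 j :: l2) with ((e :: q1 ++ [R0 j]) ++ l2) in Hndq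
        by (simpl; rewrite <- app_assoc; reflexivity).
    apply NoDup_app_remove_r in Hndq; auto. }
  assert (Hav3 : avoid (e :: q1 ++ [R0 j]) F).
  { intros w Hw'. apply Hav2, Hsub. rewrite Eq. destruct Hw' as [<-|Hw']; [left; auto|right].
    apply in_app_or in Hw'. apply in_or_app. destruct Hw' as [H|[<-|[]]]; [left; auto|right; left; auto]. }
  assert (Hne : q1 ++ [R0 j] <> []) by (destruct q1; discriminate).
  destruct (ext_lem F e _ _ Hnd Hc Hw3 Hnd3 Hav3 Hne) as [Hnd' [Hc' E']].
  rewrite removelast_last in Hnd', Hc', E'.
  exists (F ++ e :: q1), (R0 j). split; [split; [|split]|split].
  - auto.
  - auto.
  - exists [], j. split; [apply walk_nil|split].
    + intros w [<-|[]]. apply nodup_last_notin; auto.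
    + intros j' Hj' Hin. apply in_app_or in Hin. destruct Hin as [Hin|[Hin|Hin]].
      * apply (HM j'); [lia|]. apply in_or_app; auto.
      * apply (HM j'); [lia|]. apply in_or_app; right; left; auto.
      * apply (Hl1 (R0 j')); [right; auto|]. exists j'; split; auto; lia.
  - exists (q1 ++ [R0 j]). split; auto.
  - exists j; auto.
Qed.

Lemma step n F e : Inv F e -> exists F' e', Inv F' e' /\
  (exists ext, F' ++ [e'] = (F ++ [e]) ++ ext /\ ext <> []) /\ (exists j, e' = R0 j) /\
  (forall u, Upp u -> h u = n -> In u (F' ++ [e'])).
Proof.
  intros Hinv.
  destruct (classic (exists u, Upp u /\ h u = n /\ ~ In u (F ++ [e]))) as [[u [Hu [Hn Hnin]]]|Hno].
  - destruct (stepU F e u Hinv Hu Hnin) as [F1 [Hinv1 [ext1 E1]]].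
    destruct (stepR F1 u Hinv1) as [F' [e' [Hinv' [[ext [E Hne]] Hj]]]].
    exists F', e'. split; auto. split; [|split; auto].
    + exists (ext1 ++ ext). split. rewrite E, E1, app_assoc. reflexivity. destruct ext; [contradiction|].
      destruct ext1; discriminate.
    + intros u' Hu' Hn'. assert (u' = u) by (apply Hh; [apply Hu'|apply Hu|congruence]). subst u'.
      rewrite E. apply in_or_app; left. apply in_or_app; right; left; auto.
  - destruct (stepR F e Hinv) as [F' [e' [Hinv' [[ext [E Hne]] Hj]]]].
    exists F', e'. split; auto. split; [exists ext; auto|split; auto].
    intros u Hu Hn. rewrite E. apply in_or_app; left.
    apply NNPP. intros Hnin. apply Hno. exists u. auto.
Qed.


Definition full (p : list V * V) := fst p ++ [snd p].
Definition Rel n (p p' : list V * V) :=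
  (exists ext, full p' = full p ++ ext /\ ext <> []) /\ (exists j, snd p' = R0 j) /\
  (forall u, Upp u -> h u = n -> In u (full p')).

Lemma step' n p : Inv (fst p) (snd p) -> exists p', Inv (fst p') (snd p') /\ Rel n p p'.
Proof.
  intros H. destruct (step n _ _ H) as [F' [e' [Hi [He [Hj Hu]]]]].
  exists (F', e'). split; auto. split; auto.
Qed.

Definition St := {p : list V * V | Inv (fst p) (snd p)}.

Lemma init_inv : Inv (fst ([] : list V, R0 0)) (snd ([] : list V, R0 0)).
Proof.
  simpl. split; [|split].
  - constructor; auto. constructor.
  - simpl; auto.
  - exists [], 0. split; [apply walk_nil|split]. intros v _ []. intros j _ [].
Qed.

Definition stepf (n : nat) (s : St) : St :=
  let (p', Hp') := constructive_indefinite_description _ (step' n _ (proj2_sig s)) in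
  exist _ p' (proj1 Hp').

Lemma stepf_rel n s : Rel n (proj1_sig s) (proj1_sig (stepf n s)).
Proof.
  unfold stepf. destruct (constructive_indefinite_description _ _) as [p' Hp']. simpl. tauto.
Qed.

Fixpoint seqS (n : nat) : St :=
  match n with
  | 0 => exist _ ([], R0 0) init_inv
  | S n => stepf n (seqS n)
  end.

Definition Pn n := full (proj1_sig (seqS n)).

Lemma Pn_inv n : NoDup (Pn n) /\ chain adj (Pn n).
Proof. unfold Pn, full. destruct (proj2_sig (seqS n)) as [A [B _]]. auto. Qed.

Lemma Pn_ext n : exists ext, Pn (S n) = Pn n ++ ext /\ ext <> [].
Proof. unfold Pn. simpl. apply (stepf_rel n (seqS n)). Qed.

Lemma Pn_len n : S n <= length (Pn n).
Proof.
  induction n. unfold Pn, full; simpl; lia.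
  destruct (Pn_ext n) as [ext [E Hne]]. rewrite E, length_app. destruct ext; [contradiction|simpl; lia].
Qed.

Lemma Pn_prefix n m : n <= m -> exists l, Pn m = Pn n ++ l.
Proof.
  induction 1. exists []; rewrite app_nil_r; auto.
  destruct IHle as [l E]. destruct (Pn_ext m) as [ext [E' _]]. exists (l ++ ext). rewrite E', E, app_assoc; auto.
Qed.

Definition Rr m := nth m (Pn m) (R0 0).

Lemma R_nth n m : m < length (Pn n) -> nth m (Pn n) (R0 0) = Rr m.
Proof.
  intros Hm. unfold Rr. destruct (le_lt_dec n m) as [H|H].
  - destruct (Pn_prefix n m H) as [l E]. rewrite E, app_nth1; auto.
  - destruct (Pn_prefix m n (Nat.lt_le_incl _ _ H)) as [l E]. rewrite E, app_nth1; auto.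
    pose proof (Pn_len m); lia.
Qed.

Lemma inR v : in_ray Rr v <-> exists n, In v (Pn n).
Proof.
  split.
  - intros [m <-]. exists m. unfold Rr. apply nth_In. pose proof (Pn_len m); lia.
  - intros [n Hv]. apply In_nth with (d := R0 0) in Hv. destruct Hv as [m [Hm E]].
    exists m. rewrite <- R_nth with (n := n); auto.
Qed.

Lemma R_ray : is_ray adj Rr.
Proof.
  split.
  - intros a b E. set (n := Nat.max a b).
    pose proof (Pn_len n). destruct (Pn_inv n) as [Hnd _].
    rewrite <- (R_nth n a), <- (R_nth n b) in E by lia.
    eapply NoDup_nth; eauto; lia.
  - intros a. pose proof (Pn_len (S a)). destruct (Pn_inv (S a)) as [_ Hc].
    rewrite <- (R_nth (S a) a), <- (R_nth (S a) (S a)) by lia.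
    apply chain_nth; auto; lia.
Qed.

Lemma Upp_R u : Upp u -> in_ray Rr u.
Proof.
  intros Hu. apply inR. exists (S (h u)). unfold Pn. simpl.
  destruct (stepf_rel (h u) (seqS (h u))) as [_ [_ H]]. apply H; auto.
Qed.

Lemma R_eps : eps Rr.
Proof.
  apply HepsR. split; [apply R_ray|].
  set (r := fun n => snd (proj1_sig (seqS (S n)))).
  assert (Hr0 : forall n, exists j, r n = R0 j).
  { intros n. unfold r. simpl. apply (stepf_rel n (seqS n)). }
  assert (HrP : forall n, In (r n) (Pn (S n))).
  { intros n. unfold r, Pn, full. apply in_or_app; right; left; auto. }
  assert (Hrn : forall n, ~ In (r (S n)) (Pn (S n))).
  { intros n Hin. destruct (Pn_ext (S n)) as [ext [E Hne]].
    destruct (exists_last Hne) as [ext' [z Ez]].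
    assert (Hnd : NoDup (Pn (S (S n)))) by apply Pn_inv.
    unfold Pn, full in E, Hnd. rewrite Ez, app_assoc in E.
    apply app_inj_tail in E. destruct E as [E1 E2].
    unfold r in Hin. rewrite E1 in Hnd. apply nodup_last_notin in Hnd. apply Hnd.
    unfold Pn in Hin. apply in_or_app; left; auto. }
  exists (fun n => [r n]). split.
  - intros n. split; [|split].
    + split; [discriminate|split]. constructor; auto. constructor. simpl; auto.
    + exists (r n), []. split; auto. split; [|intros _ []]. destruct (Hr0 n) as [j ->]. exists j; auto.
    + exists [], (r n). split; auto. split; [|intros _ []]. apply inR. exists (S n); auto.
  - intros n m Hnm v [<-|[]] [E|[]].
    assert (H : forall a b, a < b -> r a <> r b).
    { intros a b Hab Eab. destruct b; [lia|]. apply (Hrn b). rewrite <- Eab.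
      destruct (Pn_prefix (S a) (S b)) as [l El]; [lia|]. rewrite El. apply in_or_app; left; auto. }
    destruct (Nat.lt_total n m) as [Hl|[Hl|Hl]]; [apply (H n m Hl)|contradiction|apply (H m n Hl)]; auto.
Qed.


Definition Sset i := (forall v, comb_interior U (C i) v -> ~ in_ray Rr v) /\ (forall u, Att u i -> Upp u).

Lemma T_cnt : cntP (fun i => ~ Sset i).
Proof.
  set (m_of := fun i => epsilon (inhabits 0) (fun m => comb_interior U (C i) (Rr m))).
  set (u_of := fun i => epsilon (inhabits (R0 0)) (fun u => Att u i /\ ~ Upp u)).
  set (G := fun u => epsilon (inhabits (fun _ : I => 0)) (fun g => forall i j, Att u i -> Att u j -> g i = g j -> i = j)).
  exists (fun i => if excluded_middle_informative (exists v, comb_interior U (C i) v /\ in_ray Rr v)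
           then 2 * m_of i else Datatypes.S (2 * Cantor.to_nat (h (u_of i), G (u_of i) i))).
  assert (Hm : forall i, (exists v, comb_interior U (C i) v /\ in_ray Rr v) -> comb_interior U (C i) (Rr (m_of i))).
  { intros i [v [Hv [m <-]]]. unfold m_of. apply (epsilon_spec (inhabits 0) (fun m => comb_interior U (C i) (Rr m))). eauto. }
  assert (Hu : forall i, ~ Sset i -> ~ (exists v, comb_interior U (C i) v /\ in_ray Rr v) -> Att (u_of i) i /\ ~ Upp (u_of i)).
  { intros i HS Hn. unfold u_of. apply (epsilon_spec (inhabits (R0 0)) (fun u => Att u i /\ ~ Upp u)).
    apply NNPP. intros H1. apply HS. split.
    - intros v Hv HR. apply Hn. eauto.
    - intros u Hau. apply NNPP. intros Hnu. apply H1. eauto. }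
  assert (HG : forall u, U u -> ~ Upp u -> forall i j, Att u i -> Att u j -> G u i = G u j -> i = j).
  { intros u Uu Hnu. unfold G. apply (epsilon_spec (inhabits (fun _ : I => 0))
      (fun g => forall i j, Att u i -> Att u j -> g i = g j -> i = j)).
    apply NNPP. intros H. apply Hnu. split; auto. }
  intros i j Hi Hj E.
  destruct (excluded_middle_informative (exists v, comb_interior U (C i) v /\ in_ray Rr v)) as [Ei|Ei];
  destruct (excluded_middle_informative (exists v, comb_interior U (C j) v /\ in_ray Rr v)) as [Ej|Ej]; try lia.
  - assert (m_of i = m_of j) by lia. apply (interior_unique i j (Rr (m_of i))); auto.
    rewrite H. auto.
  - assert (E' : Cantor.to_nat (h (u_of i), G (u_of i) i) = Cantor.to_nat (h (u_of j), G (u_of j) j)) by lia.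
    apply Cantor.to_nat_inj in E'. injection E' as E1 E2.
    destruct (Hu i Hi Ei) as [Ai Ni]. destruct (Hu j Hj Ej) as [Aj Nj].
    assert (Eu : u_of i = u_of j) by (apply Hh; auto; eapply Att_U; eauto).
    rewrite <- Eu in Aj, E2. apply (HG (u_of i)); auto. eapply Att_U; eauto.
Qed.

Lemma S_unc (Hunc : ~ exists f : I -> nat, forall i j, f i = f j -> i = j) : ~ cntP Sset.
Proof.
  intros [gS HgS]. destruct T_cnt as [gT HgT]. apply Hunc.
  exists (fun i => if excluded_middle_informative (Sset i) then 2 * gS i else Datatypes.S (2 * gT i)).
  intros i j E.
  destruct (excluded_middle_informative (Sset i)); destruct (excluded_middle_informative (Sset j)); try lia.
  - apply HgS; auto; lia.
  - apply HgT; auto; lia.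
Qed.

Definition pickI (i0 : I) (L : list I) := epsilon (inhabits i0) (fun i => Sset i /\ ~ In i L).
Fixpoint lstI i0 n := match n with 0 => [] | Datatypes.S n => pickI i0 (lstI i0 n) :: lstI i0 n end.

Lemma e_exists (Hunc : ~ exists f : I -> nat, forall i j, f i = f j -> i = j) :
  exists e : nat -> I, (forall n m, e n = e m -> n = m) /\ forall n, Sset (e n).
Proof.
  pose proof (S_unc Hunc) as Hs.
  assert (Hex : forall L, exists i, Sset i /\ ~ In i L).
  { intros L. apply NNPP. intros Hn. apply Hs.
    exists (fun i => epsilon (inhabits 0) (fun k => nth_error L k = Some i)).
    assert (Hsp : forall i, Sset i -> nth_error L (epsilon (inhabits 0) (fun k => nth_error L k = Some i)) = Some i).
    { intros i Si. apply (epsilon_spec (inhabits 0) (fun k => nth_error L k = Some i)).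
      apply In_nth_error. apply NNPP. intros Hni. apply Hn. eauto. }
    intros i j Si Sj E. pose proof (Hsp i Si) as A. pose proof (Hsp j Sj) as B. rewrite E in A.
    rewrite A in B. injection B; auto. }
  destruct (Hex []) as [i0 _].
  assert (Hp : forall L, Sset (pickI i0 L) /\ ~ In (pickI i0 L) L).
  { intros L. unfold pickI. apply epsilon_spec. apply Hex. }
  exists (fun n => pickI i0 (lstI i0 n)). split.
  - assert (Hin : forall n m, n < m -> In (pickI i0 (lstI i0 n)) (lstI i0 m)).
    { intros n m H. induction H; simpl; auto. }
    intros n m E. destruct (Nat.lt_total n m) as [H|[H|H]]; auto; exfalso.
    + apply (proj2 (Hp (lstI i0 m))). rewrite <- E. auto.
    + apply (proj2 (Hp (lstI i0 n))). rewrite E. auto.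
  - intros n. apply Hp.
Qed.

Lemma sig_eq_S (a b : {i | Sset i}) : proj1_sig a = proj1_sig b -> a = b.
Proof. destruct a, b; simpl; intros ->. f_equal. apply proof_irrelevance. Qed.

Lemma rev_tooth i n : exists x m y, rev (teeth (C i) n) = y :: rev m ++ [x] /\
  teeth (C i) n = x :: m ++ [y] /\ in_ray (spine (C i)) x /\ U y /\
  forall v, In v m -> ~ in_ray (spine (C i)) v /\ ~ U v.
Proof.
  destruct (tooth_struct i n) as [x [m [y [E H]]]]. exists x, m, y. split; auto.
  rewrite E. change (x :: m ++ [y]) with ([x] ++ m ++ [y]). rewrite !rev_app_distr. reflexivity.
Qed.

Lemma main_sec (Hunc : ~ exists f : I -> nat, forall i j, f i = f j -> i = j) :
  exists (S : I -> Prop) (R : nat -> V) (P : list V -> Prop),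
    (exists f : {i : I | S i} -> I,
        (forall a b, f a = f b -> a = b) /\ (forall i, exists a, f a = i)) /\
    eps R /\ (forall i, S i -> eps (spine (C i))) /\
    is_star_of_rays adj {i : I | S i} R (fun a => spine (C (proj1_sig a))) P.
Proof.
  exists Sset, Rr, (fun p => exists i n, Sset i /\ p = rev (teeth (C i) n)).
  split; [|split; [apply R_eps|split]].
  { destruct (e_exists Hunc) as [e [He HeS]]. destruct T_cnt as [gT HgT].
    apply (hotel Sset e He HeS gT HgT). }
  { intros i _. apply (HC i). }
  unfold is_star_of_rays. cbv zeta.
  split; [apply R_ray|]. split; [intros j; apply (HC _)|]. split.
  { intros [i Si] v Hv [k <-]. simpl in Hv. apply (proj1 Si _ (spine_interior i k)). auto. }
  split.
  { intros [i Si] [j Sj] Hij v [k <-] [k' Ek]. simpl in *. apply Hij. apply sig_eq_S. simpl.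
    apply (interior_unique i j (spine (C i) k)). apply spine_interior. rewrite <- Ek. apply spine_interior. }
  split.
  { intros p [i [n [Si ->]]].
    destruct (rev_tooth i n) as [x [m [y [Er [Et [Hx [Uy Hm]]]]]]].
    destruct (HC i) as [_ [_ [_ [Ht _]]]]. destruct (Ht n) as [[Hne [Hnd Hc]] _].
    split; [split; [|split]|].
    - destruct (teeth (C i) n); [contradiction|]. simpl. destruct (rev l); discriminate.
    - apply NoDup_rev; auto.
    - apply chain_rev; auto.
    - exists y, (rev m), x, (exist _ i Si). split; [exact Er|]. split; [|split; [exact Hx|]].
      + apply Upp_R. apply (proj2 Si). exists n, (x :: m). rewrite Et. reflexivity.
      + intros v Hv. rewrite <- in_rev in Hv. destruct (Hm v Hv) as [Hvs HvU].
        assert (Hint : comb_interior U (C i) v).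
        { split; auto. right. exists n. rewrite Et. right. apply in_or_app; auto. }
        intros [HvR|[[k Sk] [k' Ek]]].
        * apply (proj1 Si v Hint HvR).
        * simpl in Ek. assert (k = i). { apply (interior_unique k i v); auto. rewrite <- Ek. apply spine_interior. }
          subst k. apply Hvs. exists k'; auto. }
  split.
  { intros p q [i [n [Si ->]]] [j [n' [Sj ->]]] Hpq v [x' [m0 [y' [Ep Hv]]]] Hvq.
    destruct (rev_tooth i n) as [x [m [y [Er [Et [Hx [Uy Hm]]]]]]].
    rewrite Er in Ep. change (y :: rev m ++ [x]) with ((y :: rev m) ++ [x]) in Ep.
    change (x' :: m0 ++ [y']) with ((x' :: m0) ++ [y']) in Ep.
    apply app_inj_tail in Ep. destruct Ep as [Ep _]. injection Ep as _ Em.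
    assert (Hvm : In v m) by (rewrite in_rev, Em; auto).
    destruct (Hm v Hvm) as [_ HvU].
    assert (Hi : comb_interior U (C i) v).
    { split; auto. right. exists n. rewrite Et. right. apply in_or_app; auto. }
    rewrite <- in_rev in Hvq.
    assert (Hj : comb_interior U (C j) v) by (split; auto; right; exists n'; auto).
    assert (i = j) by (eapply interior_unique; eauto). subst j.
    destruct (classic (n = n')) as [->|Hnn]; [apply Hpq; reflexivity|].
    destruct (HC i) as [_ [_ [_ [_ Hd]]]]. apply (Hd n n' Hnn v); auto.
    rewrite Et. right. apply in_or_app; auto. }
  intros [i Si]. simpl. exists (fun n => rev (teeth (C i) n)). split; [|split].
  - intros n. exists i, n. auto.
  - intros n. destruct (rev_tooth i n) as [x [m [y [Er [_ [Hx _]]]]]]. exists (y :: rev m), x.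
    split; auto.
  - intros n m Hnm v Hv Hv'. rewrite <- in_rev in Hv, Hv'.
    destruct (HC i) as [_ [_ [_ [_ Hd]]]]. apply (Hd n m Hnm v); auto.
Qed.

End Main.

Theorem lemma2p1 (V : Type) (adj : V -> V -> Prop)
  (Hsym : forall x y, adj x y -> adj y x) (Hirr : forall x, ~ adj x x)
  (eps : (nat -> V) -> Prop) (Heps : is_end adj eps)
  (U : V -> Prop) (HU : countable_set U)
  (I : Type) (C : I -> comb)
  (HC : forall i, is_comb adj eps U (C i))
  (Hdisj : forall i j, i <> j -> internally_disjoint U (C i) (C j))
  (Hunc : ~ exists f : I -> nat, forall i j, f i = f j -> i = j) :
  exists (S : I -> Prop) (R : nat -> V) (P : list V -> Prop),
    (exists f : {i : I | S i} -> I,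
        (forall a b, f a = f b -> a = b) /\ (forall i, exists a, f a = i)) /\
    eps R /\ (forall i, S i -> eps (spine (C i))) /\
    is_star_of_rays adj {i : I | S i} R (fun a => spine (C (proj1_sig a))) P.
Proof.
  destruct Heps as [R0 [HR0 HepsR]]. destruct HU as [h Hh].
  exact (main_sec adj Hsym eps R0 HR0 HepsR U h Hh I C HC Hdisj Hunc).
Qed.
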